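(* Let $\theta\in(0,\pi)$ with $\cos\theta=s/r$, where $r,s\in\mathbb{Z}$, $0\le|s|<r$, $\gcd(r,s)=1$, and let $m$ be a positive rational number. A natural number $n$ belongs to $\mathcal{N}_{\theta,m}$ if and only if the system $$E_\theta^{(m,n)}:\ y^2=x\left(x+\frac{2n(r+s)}{m+1}\right)\left(x-\frac{2n(r-s)}{m+1}\right),\qquad G_\theta^{(m,n)}:\ z^2=x^4+b_1x^3+b_2x^2+b_3x+b_4,$$ has a rational solution $(x,y,z)$ with $y\ne0$, where $$b_1=8ns,\quad b_2=\frac{8n^2(2m^2r^2+4s^2m+3s^2-r^2)}{(m+1)^2},\quad b_3=-\frac{32n^3s(r^2-s^2)}{(m+1)^2},\quad b_4=\frac{16n^4(r^2-s^2)^2}{(m+1)^4}.$$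
   Context: $\mathcal{N}_{\theta,m}$ is the set of natural numbers $n$ for which there exist positive rationals $a,b,c,d,e$ with $a^2+b^2-\frac{2s}{r}ab=c^2$, $a^2+d^2+\frac{2s}{r}ad=e^2$, $a(b+d)=rn$, and $d=mb$ (a $\theta$-parallelogram envelope with ratio $m$ for $n$). *)

(* Defs.v *)
From mathcomp Require Import all_boot all_order all_algebra.
Set Implicit Arguments. Unset Strict Implicit. Unset Printing Implicit Defensive.
Import Order.TTheory GRing.Theory Num.Theory.
Local Open Scope ring_scope.

Definition in_N_theta_m (r s : int) (m : rat) (n : nat) : Prop :=
  exists a b c d e : rat,
    [/\ 0 < a, 0 < b, 0 < c, 0 < d & 0 < e] /\
    [/\ a ^+ 2 + b ^+ 2 - 2%:R * (s%:~R / r%:~R) * a * b = c ^+ 2,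
        a ^+ 2 + d ^+ 2 + 2%:R * (s%:~R / r%:~R) * a * d = e ^+ 2,
        a * (b + d) = r%:~R * n%:R
      & d = m * b].

(* Main.v *)
Require Import Defs.
From mathcomp Require Import all_boot all_order all_algebra.
Import Order.TTheory GRing.Theory Num.Theory.
Local Open Scope ring_scope.

From mathcomp Require Import ring lra.

Ltac fld := field; repeat (apply/andP; split); try assumption; rewrite ?mulf_neq0 ?expf_neq0 ?invr_neq0 ?pnatr_eq0 //.

Lemma fwd (F : realFieldType) (R S N m a b c d e : F) :
 0 < R -> -R < S -> S < R -> 0 < N -> 0 < m -> 0 < a -> 0 < b -> 0 < c -> 0 < d -> 0 < e ->
 a ^+ 2 + b ^+ 2 - 2%:R * (S / R) * a * b = c ^+ 2 ->
 a ^+ 2 + d ^+ 2 + 2%:R * (S / R) * a * d = e ^+ 2 ->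
 a * (b + d) = R * N -> d = m * b ->
 exists x y z : F,
    [/\ y != 0,
        y ^+ 2 = x * (x + 2%:R * N * (R + S) / (m + 1))
                   * (x - 2%:R * N * (R - S) / (m + 1))
      & z ^+ 2 = x ^+ 4
                 + 8%:R * N * S * x ^+ 3
                 + 8%:R * N ^+ 2
                     * (2%:R * m ^+ 2 * R ^+ 2 + 4%:R * S ^+ 2 * m
                        + 3%:R * S ^+ 2 - R ^+ 2) / (m + 1) ^+ 2 * x ^+ 2
                 - 32%:R * N ^+ 3 * S * (R ^+ 2 - S ^+ 2)
                     / (m + 1) ^+ 2 * x
                 + 16%:R * N ^+ 4 * (R ^+ 2 - S ^+ 2) ^+ 2
                     / (m + 1) ^+ 4].
Proof.
move=> R0 SR1 SR2 N0 m0 a0 b0 c0 d0 e0 hc he hab hd.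
have m1 : m + 1 != 0 by apply: lt0r_neq0; lra.
have R1 : R != 0 by apply: lt0r_neq0.
have a1 : a != 0 by apply: lt0r_neq0.
have e1 : R * N = a * b * (m + 1) by rewrite -hab hd; ring.
have hb : b = R * N / ((m + 1) * a).
  by rewrite e1; fld.
have hD : a ^+ 2 * c ^+ 2 = a ^+ 4 - 2%:R * (N / (m + 1)) * S * a ^+ 2 + R ^+ 2 * (N / (m + 1)) ^+ 2.
  by rewrite -hc hb; fld.
have hE2 : a ^+ 2 * e ^+ 2 = a ^+ 4 + 2%:R * S * m * (N / (m + 1)) * a ^+ 2 + m ^+ 2 * R ^+ 2 * (N / (m + 1)) ^+ 2.
  by rewrite -he hd hb; fld.
set p := N / (m + 1).
have p0 : 0 < p by apply: divr_gt0; lra.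
set x := 2%:R * a ^+ 2 - 2%:R * p * S + 2%:R * a * c.
have hq : x ^+ 2 + (4%:R * p * S - 4%:R * a ^+ 2) * x - 4%:R * p ^+ 2 * (R ^+ 2 - S ^+ 2) = 0.
  have -> : x ^+ 2 + (4%:R * p * S - 4%:R * a ^+ 2) * x - 4%:R * p ^+ 2 * (R ^+ 2 - S ^+ 2)
     = 4%:R * (a ^+ 2 * c ^+ 2 - (a ^+ 4 - 2%:R * p * S * a ^+ 2 + R ^+ 2 * p ^+ 2)) by rewrite /x; ring.
  by rewrite hD subrr mulr0.
have x0 : x != 0.
  apply/eqP => x0; move: hq; rewrite x0 => hq.
  have h1 : 0 < p ^+ 2 * ((R - S) * (R + S)).
    apply: mulr_gt0; first by apply: exprn_gt0.
    apply: mulr_gt0; lra.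
  nra.
exists x, (2%:R * a * x), (4%:R * x * a * e); split.
- by rewrite !mulf_neq0 // pnatr_eq0.
- apply/eqP; rewrite -subr_eq0; apply/eqP.
  have -> : (2%:R * a * x) ^+ 2 - x * (x + 2%:R * N * (R + S) / (m + 1))
                   * (x - 2%:R * N * (R - S) / (m + 1))
     = - x * (x ^+ 2 + (4%:R * p * S - 4%:R * a ^+ 2) * x - 4%:R * p ^+ 2 * (R ^+ 2 - S ^+ 2)).
    by rewrite /p; fld.
  by rewrite hq mulr0.
- apply/eqP; rewrite -subr_eq0; apply/eqP.
  set q := x ^+ 2 + (4%:R * p * S - 4%:R * a ^+ 2) * x - 4%:R * p ^+ 2 * (R ^+ 2 - S ^+ 2).
  set h := x ^+ 2 + (4%:R * p * S) * x - 4%:R * p ^+ 2 * (R ^+ 2 - S ^+ 2).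
  rewrite (_ : _ - _ = 16%:R * x ^+ 2 * (a ^+ 2 * e ^+ 2 - (a ^+ 4 + 2%:R * S * m * p * a ^+ 2 + m ^+ 2 * R ^+ 2 * p ^+ 2))
        - q * (2%:R * h - q + 8%:R * S * m * p * x)).
    by rewrite hE2 subrr mulr0 /q hq mul0r subrr.
  by rewrite /q /h /p; fld.
Qed.


Lemma bwd (F : realFieldType) (R S N m x y z : F) :
 0 < R -> -R < S -> S < R -> 0 < N -> 0 < m ->
    [/\ y != 0,
        y ^+ 2 = x * (x + 2%:R * N * (R + S) / (m + 1))
                   * (x - 2%:R * N * (R - S) / (m + 1))
      & z ^+ 2 = x ^+ 4
                 + 8%:R * N * S * x ^+ 3
                 + 8%:R * N ^+ 2
                     * (2%:R * m ^+ 2 * R ^+ 2 + 4%:R * S ^+ 2 * m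
                        + 3%:R * S ^+ 2 - R ^+ 2) / (m + 1) ^+ 2 * x ^+ 2
                 - 32%:R * N ^+ 3 * S * (R ^+ 2 - S ^+ 2)
                     / (m + 1) ^+ 2 * x
                 + 16%:R * N ^+ 4 * (R ^+ 2 - S ^+ 2) ^+ 2
                     / (m + 1) ^+ 4] ->
  exists a b c d e : F,
    [/\ 0 < a, 0 < b, 0 < c, 0 < d & 0 < e] /\
    [/\ a ^+ 2 + b ^+ 2 - 2%:R * (S / R) * a * b = c ^+ 2,
        a ^+ 2 + d ^+ 2 + 2%:R * (S / R) * a * d = e ^+ 2,
        a * (b + d) = R * N
      & d = m * b].
Proof.
move=> R0 SR1 SR2 N0 m0 [y0 hE hG].
have m1 : m + 1 != 0 by apply: lt0r_neq0; lra.
have R1 : R != 0 by apply: lt0r_neq0.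
have x0 : x != 0.
  apply: contraNneq y0 => x0.
  by move: hE; rewrite x0 !mul0r => /eqP; rewrite sqrf_eq0.
set p := N / (m + 1).
have p0 : 0 < p by apply: divr_gt0; lra.
have p1 : p != 0 by apply: lt0r_neq0.
set v := y / (2%:R * x).
have v0 : v != 0 by rewrite /v mulf_neq0 // invr_neq0 // mulf_neq0 // pnatr_eq0.
have hq : x ^+ 2 + (4%:R * p * S - 4%:R * v ^+ 2) * x - 4%:R * p ^+ 2 * (R ^+ 2 - S ^+ 2) = 0.
  have : x * (x ^+ 2 + (4%:R * p * S - 4%:R * v ^+ 2) * x - 4%:R * p ^+ 2 * (R ^+ 2 - S ^+ 2)) = 0.
    rewrite (_ : _ * _ = x * (x + 2%:R * N * (R + S) / (m + 1))
                   * (x - 2%:R * N * (R - S) / (m + 1)) - y ^+ 2); first by rewrite hE subrr.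
    by rewrite /v /p; fld.
  by move/eqP; rewrite mulf_eq0 (negbTE x0) /= => /eqP.
set a := `|v|.
have a0 : 0 < a by rewrite normr_gt0.
have a1 : a != 0 by apply: lt0r_neq0.
have ha2 : a ^+ 2 = v ^+ 2 by rewrite real_normK ?num_real.
set w := (2%:R * x + 4%:R * p * S - 4%:R * v ^+ 2) / (4%:R * v).
set c := `|w|.
have hc2 : c ^+ 2 = w ^+ 2 by rewrite real_normK ?num_real.
set e := `|z / (4%:R * x * v)|.
have he2 : e ^+ 2 = (z / (4%:R * x * v)) ^+ 2 by rewrite real_normK ?num_real.
set b := R * p / a.
have b0 : 0 < b by apply: divr_gt0 => //; apply: mulr_gt0.
have hcq : a ^+ 2 + b ^+ 2 - 2%:R * (S / R) * a * b = c ^+ 2.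
  rewrite hc2 /b.
  rewrite (_ : a ^+ 2 + (R * p / a) ^+ 2 - 2%:R * (S / R) * a * (R * p / a)
     = a ^+ 2 + R ^+ 2 * p ^+ 2 / a ^+ 2 - 2%:R * p * S); last by fld.
  rewrite ha2; apply/eqP; rewrite -subr_eq0; apply/eqP.
  rewrite (_ : _ - _ = - (x ^+ 2 + (4%:R * p * S - 4%:R * v ^+ 2) * x - 4%:R * p ^+ 2 * (R ^+ 2 - S ^+ 2)) / (4%:R * v ^+ 2)).
    by rewrite hq oppr0 mul0r.
  by rewrite /w; fld.
have heq : a ^+ 2 + (m * b) ^+ 2 + 2%:R * (S / R) * a * (m * b) = e ^+ 2.
  rewrite he2 /b.
  rewrite (_ : a ^+ 2 + (m * (R * p / a)) ^+ 2 + 2%:R * (S / R) * a * (m * (R * p / a))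
     = a ^+ 2 + m ^+ 2 * R ^+ 2 * p ^+ 2 / a ^+ 2 + 2%:R * S * m * p); last by fld.
  rewrite ha2 (_ : (z / (4%:R * x * v)) ^+ 2 = z ^+ 2 / (16%:R * x ^+ 2 * v ^+ 2)); last by fld.
  rewrite hG; apply/eqP; rewrite -subr_eq0; apply/eqP.
  set q := x ^+ 2 + (4%:R * p * S - 4%:R * v ^+ 2) * x - 4%:R * p ^+ 2 * (R ^+ 2 - S ^+ 2).
  set h := x ^+ 2 + (4%:R * p * S) * x - 4%:R * p ^+ 2 * (R ^+ 2 - S ^+ 2).
  rewrite (_ : _ - _ = - q * (2%:R * h - q + 8%:R * S * m * p * x) / (16%:R * x ^+ 2 * v ^+ 2)).
    by rewrite /q hq oppr0 !mul0r.
  by rewrite /q /h /p; fld.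
have t1 : 0 < 1 - S / R.
  rewrite (_ : 1 - S / R = (R - S) / R); last by fld.
  apply: divr_gt0 => //; lra.
have t2 : 0 < 1 + S / R.
  rewrite (_ : 1 + S / R = (R + S) / R); last by fld.
  apply: divr_gt0 => //; lra.
have ab0 : 0 < a * b by apply: mulr_gt0.
have mb0 : 0 < m * b by apply: mulr_gt0.
have amb0 : 0 < a * (m * b) by apply: mulr_gt0.
have c0 : 0 < c.
  have h1 := mulr_gt0 t1 ab0.
  have h2 := sqr_ge0 (a - b).
  have : 0 < c ^+ 2 by rewrite -hcq; nra.
  rewrite /c normr_gt0; apply: contraTneq => ->.
  by rewrite normr0 expr0n ltxx.
have e0 : 0 < e.
  have h1 := mulr_gt0 t2 amb0.
  have h2 := sqr_ge0 (a - m * b).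
  have : 0 < e ^+ 2 by rewrite -heq; nra.
  rewrite /e normr_gt0; apply: contraTneq => ->.
  by rewrite normr0 expr0n ltxx.
exists a, b, c, (m * b), e; split; split => //.
by rewrite /b /p; fld.
Qed.

Theorem theorem4p1 (r s : int) (m : rat) (n : nat) :
  0 <= `|s| -> `|s| < r -> gcdz r s = 1 -> 0 < m -> (0 < n)%N ->
  in_N_theta_m r s m n <->
  exists x y z : rat,
    [/\ y != 0,
        y ^+ 2 = x * (x + 2%:R * n%:R * (r + s)%:~R / (m + 1))
                   * (x - 2%:R * n%:R * (r - s)%:~R / (m + 1))
      & z ^+ 2 = x ^+ 4
                 + 8%:R * n%:R * s%:~R * x ^+ 3
                 + 8%:R * n%:R ^+ 2
                     * (2%:R * m ^+ 2 * r%:~R ^+ 2 + 4%:R * s%:~R ^+ 2 * m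
                        + 3%:R * s%:~R ^+ 2 - r%:~R ^+ 2) / (m + 1) ^+ 2 * x ^+ 2
                 - 32%:R * n%:R ^+ 3 * s%:~R * (r%:~R ^+ 2 - s%:~R ^+ 2)
                     / (m + 1) ^+ 2 * x
                 + 16%:R * n%:R ^+ 4 * (r%:~R ^+ 2 - s%:~R ^+ 2) ^+ 2
                     / (m + 1) ^+ 4].

Proof.
move=> _ hsr _ m0 n0.
have hr : 0 < r%:~R :> rat.
  rewrite ltr0z; apply: le_lt_trans hsr; exact: normr_ge0.
move: hsr; rewrite ltr_norml => /andP [h1 h2].
have S1 : - (r%:~R) < s%:~R :> rat by rewrite -intrN ltr_int.
have S2 : s%:~R < r%:~R :> rat by rewrite ltr_int.
have N0 : 0 < n%:R :> rat by rewrite ltr0n.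
rewrite !intrD !intrN; split.
- move=> [a [b [c [d [e [[a0 b0 c0 d0 e0] [hc he hab hd]]]]]]].
  have := (@fwd rat _ _ _ _ _ _ _ _ _ hr S1 S2 N0 m0 a0 b0 c0 d0 e0 hc he hab hd). move=> H. exact H.
- move=> [x [y [z H]]].
  exact (@bwd rat _ _ _ _ _ _ _ hr S1 S2 N0 m0 H).
Qed.
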